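(* Let $p$ be a prime, $q=p^l$, $m\ge1$, $n=2m$. For $0\leqslant r<n(q-1)$, $I\subseteq M_r$ and $\overline{I}=M_r\setminus I$, the dual code (with respect to the standard inner product on $\mathbb{F}_q^{q^n}$) satisfies $$\mathcal{C}_q(r,I,n)^\perp=\mathcal{C}_q(n(q-1)-r,\overline{I},n).$$
   Context: Let $N=q^n-1$ and $\alpha$ a primitive element of $\mathbb{F}_{q^n}$. Every integer $0\le u\le q^n-1$ is written $u=\sum_{i=0}^{n-1}u_iq^i$, $u_i\in\{0,\dots,q-1\}$; $\mathrm{wt}_q(u)=\sum u_i$, $O(u)=\sum_{i\text{ odd}}u_i$, $E(u)=\sum_{i\text{ even}}u_i$. For $-1\le r<n(q-1)$, $Z_r=\{\alpha^u\mid 0<u\le q^n-1,\ \mathrm{wt}_q(u)\le n(q-1)-r-1\}$. For $0\le r\le n(q-1)$ and integer $k\ge0$, $\Theta^{(r)}_k=\{\alpha^u\mid 0\le u\le q^n-1,\ \mathrm{wt}_q(u)=n(q-1)-r,\ |O(u)-E(u)|=k\}$. $M_r$ is the set of even (resp. odd) integers $k\in[0,m(q-1)]$ when $r$ is even (resp. odd). For $0\le r<n(q-1)$, $I\subseteq M_r$: $\overline I=M_r\setminus I$, $Z_{r,I}=Z_r\cup\bigcup_{k\in\overline I}\Theta^{(r)}_k$. A cyclic code of length $N$ over $\mathbb{F}_q$ with zero set $Z$ is $\{(c_0,\dots,c_{N-1})\in\mathbb{F}_q^N\mid \sum_ic_i\beta^i=0\ \forall\beta\in Z\}$, coordinate $i$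 labelled by $\alpha^i$. $\mathcal{C}_q(r,I,n)^*$ is the cyclic code with zero set $Z_{r,I}$ and $\mathcal{C}_q(r,I,n)$ its extended code (coordinates indexed by $\mathbb{F}_{q^n}$, extra coordinate labelled $0$ equal to $-\sum_ic_i$). The generalized Reed–Muller code $\mathcal{R}_q(r,n)$ ($-1\le r<n(q-1)$) is the extended code of the cyclic code with zero set $Z_r$, and $\mathcal{R}_q(n(q-1),n)=\mathbb{F}_q^{q^n}$. By convention, $\mathcal{C}_q(n(q-1),I,n)=\mathcal{R}_q(n(q-1)-1,n)$ if $0\notin I$ and $\mathcal{C}_q(n(q-1),I,n)=\mathbb{F}_q^{q^n}$ if $0\in I$. *)

(* Defs.v *)
From HB Require Import structures.
From mathcomp Require Import all_boot all_order all_algebra all_field.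
Set Implicit Arguments. Unset Strict Implicit. Unset Printing Implicit Defensive.
Import GRing.Theory.
Local Open Scope ring_scope.

(* The field F_{q^n} is a finite field L with #|L| = q^n; F_q is realised as its
   unique subfield of order q, namely {x in L | x^q = x}. Codewords of length
   q^n are functions L -> L (coordinates indexed by F_{q^n}) with values in F_q. *)

Section Codes.
Variables (L : finFieldType) (q n m : nat) (alpha : L).

Definition digit (i u : nat) : nat := ((u %/ q ^ i) %% q)%N.
Definition wtq (u : nat) : nat := (\sum_(i < n) digit i u)%N.
Definition Osum (u : nat) : nat := (\sum_(i < n | odd i) digit i u)%N.
Definition Esum (u : nat) : nat := (\sum_(i < n | ~~ odd i) digit i u)%N.
Definition OEdiff (u : nat) : nat := ((Osum u - Esum u) + (Esum u - Osum u))%N.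

Definition N : nat := (q ^ n - 1)%N.

Definition Zr (r : nat) : {set L} :=
  [set b | [exists u : 'I_(q ^ n),
     [&& 0 < (u : nat), b == alpha ^+ u & wtq u + r + 1 <= n * (q - 1)]%N]].

Definition Theta (r k : nat) : {set L} :=
  [set b | [exists u : 'I_(q ^ n),
     [&& b == alpha ^+ u, wtq u == n * (q - 1) - r & OEdiff u == k]%N]].

Definition Mr (r : nat) : pred nat :=
  [pred k | (k <= m * (q - 1))%N && (odd k == odd r)].

Definition Ibar (r : nat) (I : pred nat) : pred nat :=
  [pred k | Mr r k && ~~ I k].

Definition ZrI (r : nat) (I : pred nat) : {set L} :=
  Zr r :|: \bigcup_(k < (m * (q - 1)).+1 | Ibar r I k) Theta r k.

Definition inFq (x : L) : bool := x ^+ q == x.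

Definition cyclic_code (Z : {set L}) (c : 'I_N -> L) : bool :=
  [forall i, inFq (c i)] &&
  [forall b in Z, \sum_(i < N) c i * b ^+ i == 0].

Definition ext_code (Z : {set L}) : {set {ffun L -> L}} :=
  [set c : {ffun L -> L} | cyclic_code Z (fun i : 'I_N => c (alpha ^+ i))
           && (c 0 == - \sum_(i < N) c (alpha ^+ i))].

Definition full_code : {set {ffun L -> L}} := [set c : {ffun L -> L} | [forall x, inFq (c x)]].

Definition RM (r : nat) : {set {ffun L -> L}} :=
  if (r < n * (q - 1))%N then ext_code (Zr r) else full_code.

(* C_q(r,I,n), with the paper's convention for r = n(q-1)
   (values for r > n(q-1) are irrelevant / never used) *)
Definition Ccode (r : nat) (I : pred nat) : {set {ffun L -> L}} :=
  if (r < n * (q - 1))%N then ext_code (ZrI r I)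
  else if I 0%N then full_code else RM (n * (q - 1) - 1).

Definition dual (C : {set {ffun L -> L}}) : {set {ffun L -> L}} :=
  [set d : {ffun L -> L} | [forall x, inFq (d x)] && [forall c in C, \sum_x c x * d x == 0]].

End Codes.

(* Main.v *)
Require Import Defs.
From mathcomp Require Import all_boot all_order all_algebra all_field.
From mathcomp Require Import zify.
Import GRing.Theory.
Set Implicit Arguments. Unset Strict Implicit. Unset Printing Implicit Defensive.

Section DigitsNat.
Variable q : nat.
Hypothesis q_gt1 : (1 < q)%N.

Lemma q_gt0 : (0 < q)%N. Proof. by apply: ltn_trans q_gt1. Qed.

Lemma digitS i u : digit q i.+1 u = digit q i (u %/ q).
Proof. by rewrite /digit expnS divnMA. Qed.

Lemma digit0 u : digit q 0 u = u %% q.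
Proof. by rewrite /digit expn0 divn1. Qed.

Lemma digit_lt i u : (digit q i u < q)%N.
Proof. by rewrite /digit ltn_pmod // q_gt0. Qed.

Lemma val_digits n u : (u < q ^ n)%N -> u = (\sum_(i < n) digit q i u * q ^ i)%N.
Proof.
elim: n u => [|n IH] u hu.
  by rewrite big_ord0; move: hu; rewrite expn0 ltnS leqn0 => /eqP.
rewrite big_ord_recl digit0 expn0 muln1.
under eq_bigr => i _ do rewrite lift0 digitS expnS mulnCA.
rewrite -big_distrr /= -IH; last by rewrite ltn_divLR ?q_gt0 // mulnC -expnS.
by rewrite addnC mulnC -divn_eq.
Qed.

Lemma digit_val n (d : nat -> nat) i : (forall j, (j < n)%N -> (d j < q)%N) -> (i < n)%N ->
  digit q i (\sum_(j < n) d j * q ^ j)%N = d i.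
Proof.
elim: n d i => [|n IH] d i hd hi; first by [].
rewrite big_ord_recl expn0 muln1.
under eq_bigr => j _ do rewrite lift0 expnS mulnCA.
rewrite -big_distrr /=.
case: i hi => [|i] hi.
  by rewrite digit0 addnC mulnC modnMDl modn_small // hd.
rewrite digitS addnC mulnC divnMDl ?q_gt0 // divn_small ?hd // addn0.
by apply: (IH (fun j => d j.+1)) => // j hj; apply: hd.
Qed.

Lemma sum_geom n : (\sum_(i < n) (q - 1) * q ^ i = q ^ n - 1)%N.
Proof.
elim: n => [|n IH]; first by rewrite big_ord0 expn0.
rewrite big_ord_recr /= IH expnS.
have : (0 < q ^ n)%N by rewrite expn_gt0 q_gt0.
move: (q ^ n) => x hx. have := q_gt1. nia.
Qed.

Lemma digitN n s i : (s < q ^ n)%N -> (i < n)%N ->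
  digit q i (q ^ n - 1 - s) = (q - 1 - digit q i s)%N.
Proof.
move=> hs hi.
have -> : (q ^ n - 1 - s = \sum_(j < n) (q - 1 - digit q j s) * q ^ j)%N.
  have h1 := val_digits hs. have h2 := sum_geom n.
  have h3 : (\sum_(j < n) (q - 1 - digit q j s) * q ^ j + \sum_(j < n) digit q j s * q ^ j
             = \sum_(j < n) (q - 1) * q ^ j)%N.
    rewrite -big_split; apply: eq_bigr => j _ /=; rewrite -mulnDl subnK //.
    have := digit_lt j s; lia.
  lia.
by rewrite (@digit_val n (fun j => q - 1 - digit q j s)) // => j _; have := q_gt1; lia.
Qed.

Lemma wt_le n u : (wtq q n u <= n * (q - 1))%N.
Proof.
rewrite /wtq -[n in (_ <= n * _)%N]card_ord -sum_nat_const.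
apply: leq_sum => i _; have := digit_lt i u; lia.
Qed.

Lemma wtN n s : (s < q ^ n)%N -> wtq q n (q ^ n - 1 - s) = (n * (q - 1) - wtq q n s)%N.
Proof.
move=> hs; rewrite /wtq.
under eq_bigr => i _ do rewrite digitN //.
have h : (\sum_(i < n) (q - 1 - digit q i s) + \sum_(i < n) digit q i s = n * (q - 1))%N.
  rewrite -big_split -[n in (_ = n * _)%N]card_ord -sum_nat_const; apply: eq_bigr => i _ /=.
  have := digit_lt i s; lia.
by rewrite -h addnK.
Qed.

Lemma wt0 n u : (u < q ^ n)%N -> wtq q n u = 0%N -> u = 0%N.
Proof.
move=> hu hw; rewrite (val_digits hu) big1 // => i _.
move/eqP: hw; rewrite /wtq sum_nat_eq0 => /forall_inP /(_ i isT) /eqP ->.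
by rewrite mul0n.
Qed.

End DigitsNat.

Lemma sum_odd m (F : nat -> nat) :
  (\sum_(i < 2 * m | odd i) F i = \sum_(j < m) F (2 * j).+1)%N.
Proof.
elim: m => [|m IH]; first by rewrite !big_ord0.
rewrite big_mkcond /= in IH; rewrite big_mkcond /=.
have -> : (2 * m.+1 = (2 * m).+2)%N by rewrite mulnS.
rewrite !big_ord_recr /= IH.
by rewrite mul2n odd_double /= ?addn0.
Qed.

Lemma sum_even m (F : nat -> nat) :
  (\sum_(i < 2 * m | ~~ odd i) F i = \sum_(j < m) F (2 * j))%N.
Proof.
elim: m => [|m IH]; first by rewrite !big_ord0.
rewrite big_mkcond /= in IH; rewrite big_mkcond /=.
have -> : (2 * m.+1 = (2 * m).+2)%N by rewrite mulnS.
rewrite !big_ord_recr /= IH.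
by rewrite mul2n odd_double /= ?addn0.
Qed.

Section DigitsOE.
Variable q m : nat.
Hypothesis q_gt1 : (1 < q)%N.

Lemma OsumE u : Osum q (2 * m) u = (\sum_(j < m) digit q (2 * j).+1 u)%N.
Proof. by rewrite /Osum (sum_odd m (fun i => digit q i u)). Qed.
Lemma EsumE u : Esum q (2 * m) u = (\sum_(j < m) digit q (2 * j) u)%N.
Proof. by rewrite /Esum (sum_even m (fun i => digit q i u)). Qed.

Lemma wtOE u : wtq q (2 * m) u = (Osum q (2 * m) u + Esum q (2 * m) u)%N.
Proof. by rewrite /wtq (bigID (fun i : 'I__ => odd i)). Qed.

Lemma Osum_le u : (Osum q (2 * m) u <= m * (q - 1))%N.
Proof.
rewrite OsumE -[m in (_ <= m * _)%N]card_ord -sum_nat_const.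
apply: leq_sum => i _; have := digit_lt q_gt1 (2 * i).+1 u; lia.
Qed.
Lemma Esum_le u : (Esum q (2 * m) u <= m * (q - 1))%N.
Proof.
rewrite EsumE -[m in (_ <= m * _)%N]card_ord -sum_nat_const.
apply: leq_sum => i _; have := digit_lt q_gt1 (2 * i) u; lia.
Qed.

Lemma OEdiff_le u : (OEdiff q (2 * m) u <= m * (q - 1))%N.
Proof. rewrite /OEdiff; have := Osum_le u; have := Esum_le u; lia. Qed.

Lemma OEdiff_odd u : odd (OEdiff q (2 * m) u) = odd (wtq q (2 * m) u).
Proof.
rewrite wtOE /OEdiff.
have h : ((Osum q (2 * m) u - Esum q (2 * m) u + (Esum q (2 * m) u - Osum q (2 * m) u)) %% 2
   = (Osum q (2 * m) u + Esum q (2 * m) u) %% 2)%N by lia.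
rewrite !modn2 in h.
by case: (odd _) h; case: (odd _).
Qed.

Lemma OsumN s : (s < q ^ (2 * m))%N ->
  Osum q (2 * m) (q ^ (2 * m) - 1 - s) = (m * (q - 1) - Osum q (2 * m) s)%N.
Proof.
move=> hs; rewrite !OsumE.
have h : (\sum_(j < m) digit q (2 * j).+1 (q ^ (2 * m) - 1 - s) + \sum_(j < m) digit q (2 * j).+1 s
   = m * (q - 1))%N.
  rewrite -big_split -[m in (_ = m * _)%N]card_ord -sum_nat_const; apply: eq_bigr => i _ /=.
  rewrite digitN //; last by have := ltn_ord i; lia.
  have := digit_lt q_gt1 (2 * i).+1 s; lia.
by rewrite -h addnK.
Qed.

Lemma EsumN s : (s < q ^ (2 * m))%N ->
  Esum q (2 * m) (q ^ (2 * m) - 1 - s) = (m * (q - 1) - Esum q (2 * m) s)%N.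
Proof.
move=> hs; rewrite !EsumE.
have h : (\sum_(j < m) digit q (2 * j) (q ^ (2 * m) - 1 - s) + \sum_(j < m) digit q (2 * j) s
   = m * (q - 1))%N.
  rewrite -big_split -[m in (_ = m * _)%N]card_ord -sum_nat_const; apply: eq_bigr => i _ /=.
  rewrite digitN //; last by have := ltn_ord i; lia.
  have := digit_lt q_gt1 (2 * i) s; lia.
by rewrite -h addnK.
Qed.

Lemma OEdiffN s : (s < q ^ (2 * m))%N ->
  OEdiff q (2 * m) (q ^ (2 * m) - 1 - s) = OEdiff q (2 * m) s.
Proof.
move=> hs; rewrite /OEdiff OsumN // EsumN //.
have := Osum_le s; have := Esum_le s; lia.
Qed.

End DigitsOE.

Definition rot (q n t : nat) : nat := ((t %% q ^ n.-1) * q + t %/ q ^ n.-1)%N.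

Section Rot.
Variable q : nat.
Hypothesis q_gt1 : (1 < q)%N.
Let q0 := q_gt0 q_gt1.

Lemma rot_digit0 k t : digit q 0 (rot q k.+1 t) = digit q k t.
Proof. by rewrite digit0 /rot /= modnMDl. Qed.

Lemma rot_digitS k i t : (t < q ^ k.+1)%N -> (i < k)%N ->
  digit q i.+1 (rot q k.+1 t) = digit q i t.
Proof.
move=> ht hik; rewrite /rot /= digitS divnMDl // divn_small ?addn0; last first.
  by rewrite ltn_divLR ?expn_gt0 ?q0 // -expnS.
rewrite /digit.
have e : (q ^ k = q ^ (k - i).-1 * q * q ^ i)%N.
  by rewrite -expnSr prednK ?subn_gt0 // -expnD subnK // ltnW.
rewrite [in t %/ q ^ i](divn_eq t (q ^ k)) e mulnA divnMDl ?expn_gt0 ?q0 //.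
by rewrite mulnA modnMDl.
Qed.

Lemma rot_lt k t : (t < q ^ k.+1)%N -> (rot q k.+1 t < q ^ k.+1)%N.
Proof.
move=> ht; rewrite /rot /=.
have h1 : (t %% q ^ k < q ^ k)%N by rewrite ltn_pmod ?expn_gt0 ?q0.
have h2 : (t %/ q ^ k < q)%N by rewrite ltn_divLR ?expn_gt0 ?q0 // -expnS.
rewrite expnSr; move: h1 h2; move: (t %% q ^ k) (t %/ q ^ k) (q ^ k) => b a X.
nia.
Qed.

Lemma rot_mod k t : rot q k.+1 t = t * q %[mod q ^ k.+1 - 1].
Proof.
have ht := divn_eq t (q ^ k).
have hX : (0 < q ^ k)%N by rewrite expn_gt0 q0.
have -> : (t * q = t %/ q ^ k * (q ^ k.+1 - 1) + rot q k.+1 t)%N.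
  rewrite /rot /= expnS; move: ht hX; move: (t %% q ^ k) (t %/ q ^ k) (q ^ k) => b a X.
  move=> -> hX. have : (1 <= q * X)%N by nia. nia.
by rewrite modnMDl.
Qed.

Lemma rot_gt0 k t : (0 < t)%N -> (0 < rot q k.+1 t)%N.
Proof.
move=> ht; rewrite /rot /=.
have := divn_eq t (q ^ k); move: (t %% q ^ k) (t %/ q ^ k) (q ^ k) => b a X.
move: q0 => q0'. nia.
Qed.

Lemma wt_rot k t : (t < q ^ k.+1)%N -> wtq q k.+1 (rot q k.+1 t) = wtq q k.+1 t.
Proof.
move=> ht; rewrite /wtq big_ord_recl rot_digit0 big_ord_recr /= addnC; congr (_ + _)%N.
by apply: eq_bigr => i _; rewrite /bump /= add1n rot_digitS.
Qed.

Lemma Osum_rot m t : (t < q ^ (2 * m.+1))%N ->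
  Osum q (2 * m.+1) (rot q (2 * m.+1) t) = Esum q (2 * m.+1) t.
Proof.
move=> ht; rewrite OsumE EsumE.
have e : (2 * m.+1 = (2 * m).+2)%N by rewrite mulnS.
rewrite e in ht *; apply: eq_bigr => j _; rewrite rot_digitS //.
by have := ltn_ord j; lia.
Qed.

Lemma Esum_rot m t : (t < q ^ (2 * m.+1))%N ->
  Esum q (2 * m.+1) (rot q (2 * m.+1) t) = Osum q (2 * m.+1) t.
Proof.
move=> ht; rewrite OsumE EsumE.
have e : (2 * m.+1 = (2 * m).+2)%N by rewrite mulnS.
rewrite e in ht *; rewrite big_ord_recl muln0 rot_digit0 big_ord_recr /= addnC.
congr (_ + _)%N; apply: eq_bigr => j _; rewrite /bump /= add1n mulnS add2n rot_digitS //.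
by have := ltn_ord j; lia.
Qed.

Lemma OEdiff_rot m t : (t < q ^ (2 * m.+1))%N ->
  OEdiff q (2 * m.+1) (rot q (2 * m.+1) t) = OEdiff q (2 * m.+1) t.
Proof. by move=> ht; rewrite /OEdiff Osum_rot // Esum_rot // addnC. Qed.

Lemma modeq_1N N a b : (0 < a <= N)%N -> (0 < b <= N)%N -> a = b %[mod N] -> a = b.
Proof.
move=> /andP[a0 aN] /andP[b0 bN].
have [ea|ea] := eqVneq a N; have [eb|eb] := eqVneq b N.
- by rewrite ea eb.
- rewrite ea modnn modn_small; first by move=> h; move: b0; rewrite -h.
  by rewrite ltn_neqAle eb.
- rewrite eb modnn modn_small; first by move=> h; move: a0; rewrite h.
  by rewrite ltn_neqAle ea.
- by rewrite !modn_small // ltn_neqAle ?ea ?eb.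
Qed.

Lemma rot_invariant m k t v : 
  (0 < t <= q ^ (2 * m.+1) - 1)%N -> (0 < v <= q ^ (2 * m.+1) - 1)%N ->
  v = t * q ^ k %[mod q ^ (2 * m.+1) - 1] ->
  wtq q (2 * m.+1) v = wtq q (2 * m.+1) t /\ OEdiff q (2 * m.+1) v = OEdiff q (2 * m.+1) t.
Proof.
set n := (2 * m.+1)%N.
have en : n = (2 * m).+2 by rewrite /n mulnS.
have hQ : (0 < q ^ n)%N by rewrite expn_gt0 q0.
move=> ht hv hmod.
have H : forall k, [/\ (0 < iter k (rot q n) t <= q ^ n - 1)%N,
   iter k (rot q n) t = t * q ^ k %[mod q ^ n - 1],
   wtq q n (iter k (rot q n) t) = wtq q n t &
   OEdiff q n (iter k (rot q n) t) = OEdiff q n t].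
  elim=> [|j [h1 h2 h3 h4]] /=; first by rewrite expn0 muln1.
  have lt : (iter j (rot q n) t < q ^ n)%N by move: h1 hQ; clear; lia.
  have lt' := lt; rewrite en in lt'.
  split.
  - have := rot_lt lt'; have := @rot_gt0 (2 * m).+1 (iter j (rot q n) t).
    rewrite -en; move: h1 hQ; clear; lia.
  - rewrite en rot_mod -en -modnMml h2 modnMml expnS mulnCA mulnA.
    by rewrite (mulnC q t) -!mulnA (mulnC q (q ^ j)).
  - by rewrite /n wt_rot -/n ?h3 // /n -en.
  - by rewrite /n OEdiff_rot -/n ?h4 // /n -en.
have [h1 h2 h3 h4] := H k.
have -> : v = iter k (rot q n) t by apply: (modeq_1N hv h1); rewrite hmod h2.
by split.
Qed.

End Rot.

Section Field.
Local Open Scope ring_scope.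
Variables (L : finFieldType) (q n : nat) (alpha : L).
Hypothesis q_gt1 : (1 < q)%N.
Hypothesis n_gt0 : (0 < n)%N.
Hypothesis cardL : #|L| = (q ^ n)%N.
Hypothesis prim : (N q n).-primitive_root alpha.
Hypothesis Lcard0 : (#|L|%:R : L) = 0.
Hypothesis frobD : forall x y : L, (x + y) ^+ q = x ^+ q + y ^+ q.

Lemma N_gt0 : (0 < N q n)%N.
Proof.
rewrite /N; have : (q ^ 1 <= q ^ n)%N by rewrite leq_pexp2l // ltnW.
rewrite expn1; have := q_gt1; lia.
Qed.

Lemma NS : (N q n).+1 = #|L|.
Proof. by rewrite cardL /N subn1 prednK // expn_gt0 (q_gt0 q_gt1). Qed.

Lemma expN (x : L) : x != 0 -> x ^+ N q n = 1.
Proof.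
move=> hx; have := expf_card x; rewrite -NS exprS => h.
by apply: (mulfI hx); rewrite h mulr1.
Qed.

Lemma alpha_neq0 : alpha != 0.
Proof. by rewrite (prim_root_eq0 prim) -lt0n N_gt0. Qed.

Lemma sum_split (f : L -> L) : \sum_(x : L) f x = f 0 + \sum_(i < N q n) f (alpha ^+ i).
Proof.
rewrite (bigD1 0) //=; congr (_ + _).
have inj : {in [pred i : 'I_(N q n) | true] &, injective (fun i : 'I_(N q n) => alpha ^+ i)}.
  move=> i j _ _ /eqP; rewrite (eq_prim_root_expr prim) !modn_small // => /eqP h.
  exact: val_inj.
rewrite -(big_imset _ inj); apply: eq_bigl => x /=.
apply/idP/idP.
  move=> hx; have [i ->] := prim_rootP prim (expN hx).
  by apply/imsetP; exists i.
by case/imsetP => i _ ->; rewrite expf_neq0 // alpha_neq0.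
Qed.

Lemma sum_pow e : ~~ ((0 < e)%N && (N q n %| e)%N) -> \sum_(x : L) x ^+ e = 0.
Proof.
case: e => [|e] /= hd.
  under eq_bigr do rewrite expr0.
  by rewrite sumr_const cardT -cardE Lcard0.
rewrite sum_split expr0n /= add0r.
under eq_bigr do rewrite exprAC.
set g := alpha ^+ e.+1.
have g1 : g != 1 by rewrite /g -(prim_order_dvd prim).
have : (g - 1) * \sum_(i < N q n) g ^+ i = 0.
  by rewrite -subrX1 /g exprAC (prim_expr_order prim) expr1n subrr.
by move/eqP; rewrite mulf_eq0 subr_eq0 (negbTE g1) /= => /eqP.
Qed.

Lemma kernel (x y : L) :
  \sum_(i < (N q n).+1) x ^+ (N q n - i) * y ^+ i = (x != y)%:R.
Proof.
have := subrXX x y (N q n).+1.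
rewrite [in X in X = _ -> _]NS !expf_card /=.
have hle : forall i : 'I_(N q n).+1, (i <= N q n)%N by move=> i; rewrite -ltnS ltn_ord.
case: eqVneq => [<-|hxy] h /=.
  under eq_bigr => i _ do rewrite -exprD subnK ?hle //.
  by rewrite sumr_const card_ord NS -[_ *+ #|L|]mulr_natr Lcard0 mulr0.
apply: (mulfI (_ : x - y != 0)); first by rewrite subr_eq0.
by rewrite -h mulr1.
Qed.

Definition S (c : {ffun L -> L}) (t : nat) : L := \sum_(x : L) c x * x ^+ t.

Lemma interp (c : {ffun L -> L}) (y : L) : c y = S c 0 - \sum_(i < (N q n).+1) S c (N q n - i) * y ^+ i.
Proof.
have -> : c y = \sum_(x : L) c x * (1 - \sum_(i < (N q n).+1) x ^+ (N q n - i) * y ^+ i).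
  rewrite (bigD1 y) //= kernel eqxx subr0 mulr1 big1 ?addr0 // => x hx.
  by rewrite kernel hx subrr mulr0.
under eq_bigr => x _ do rewrite mulrBr mulr1 mulr_sumr.
rewrite sumrB /S; under [X in _ = X - _]eq_bigr => x _ do rewrite expr0 mulr1.
congr (_ - _); rewrite exchange_big /=; apply: eq_bigr => i _.
by rewrite mulr_suml; apply: eq_bigr => x _; rewrite mulrA.
Qed.

Lemma orth (c d : {ffun L -> L}) : S c 0 = 0 ->
  (forall i, (i <= N q n)%N -> S c (N q n - i) = 0 \/ S d i = 0) ->
  \sum_(x : L) c x * d x = 0.
Proof.
move=> h0 hi.
under eq_bigr => y _ do rewrite (interp c y) h0 sub0r mulNr mulr_suml.
rewrite sumrN exchange_big big1 ?oppr0 // => i _ /=.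
under eq_bigr => y _ do rewrite -mulrA.
rewrite -mulr_sumr.
have hle : (i <= N q n)%N by rewrite -ltnS ltn_ord.
have [->|h] := hi i hle; first by rewrite mul0r.
have -> : \sum_(y : L) y ^+ i * d y = S d i by apply: eq_bigr => y _; rewrite mulrC.
by rewrite h mulr0.
Qed.

Definition Cset (P : pred nat) : {set {ffun L -> L}} :=
  [set c : {ffun L -> L} | [forall x, inFq q (c x)] &&
     [forall t : 'I_(N q n).+1, P t ==> (S c t == 0)]].

Lemma CsetP (P : pred nat) (c : {ffun L -> L}) : reflect ((forall x, inFq q (c x)) /\
   (forall t, (t <= N q n)%N -> P t -> S c t = 0)) (c \in Cset P).
Proof.
rewrite inE; apply: (iffP andP) => [[/forallP h1 /forallP h2]|[h1 h2]]; split => //.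
- move=> t ht Pt; have := h2 (Ordinal (ht : (t < (N q n).+1)%N)).
  by rewrite /= Pt => /eqP.
- by apply/forallP.
- apply/forallP => t; apply/implyP => Pt; apply/eqP; apply: h2 => //.
  by rewrite -ltnS ltn_ord.
Qed.

Lemma Cset_ext (P P' : pred nat) : (forall t, (t <= N q n)%N -> P t = P' t) -> Cset P = Cset P'.
Proof.
move=> h; apply/setP => c; apply/CsetP/CsetP => [][h1 h2]; split => // t ht.
  by rewrite -h //; apply: h2.
by rewrite h //; apply: h2.
Qed.

Definition Pperp (P : pred nat) : pred nat := fun s => ~~ P (N q n - s)%N.

Lemma forward (P : pred nat) (c d : {ffun L -> L}) : P 0%N -> c \in Cset P -> d \in Cset (Pperp P) ->
  \sum_(x : L) c x * d x = 0.
Proof.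
move=> P0 /CsetP[_ hc] /CsetP[_ hd]; apply: orth; first by apply: hc.
move=> i hi; case: (boolP (P (N q n - i)%N)) => h.
  by left; apply: hc => //; apply: leq_subr.
by right; apply: hd.
Qed.

Definition Tr (y : L) : L := \sum_(j < n) y ^+ (q ^ j).

Lemma frobqj j (x y : L) : (x + y) ^+ (q ^ j) = x ^+ (q ^ j) + y ^+ (q ^ j).
Proof.
elim: j x y => [|j IH] x y; first by rewrite expn0 !expr1.
by rewrite expnS !exprM frobD IH.
Qed.

Lemma frobqj_sum j (I : Type) (r : seq I) (Pr : pred I) (F : I -> L) :
  (\sum_(i <- r | Pr i) F i) ^+ (q ^ j) = \sum_(i <- r | Pr i) F i ^+ (q ^ j).
Proof.
apply: (big_morph (fun x : L => x ^+ (q ^ j))); first exact: frobqj.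
by rewrite expr0n expn_eq0 (negbTE (lt0n_neq0 (q_gt0 q_gt1))).
Qed.

Lemma inFq_pow j (x : L) : inFq q x -> x ^+ (q ^ j) = x.
Proof.
move=> /eqP hx; elim: j => [|j IH]; first by rewrite expn0 expr1.
by rewrite expnS exprM hx IH.
Qed.

Lemma inFq_add (x y : L) : inFq q x -> inFq q y -> inFq q (x + y).
Proof. by move=> /eqP hx /eqP hy; rewrite /inFq frobD hx hy. Qed.

Lemma inFq_opp (x : L) : inFq q x -> inFq q (- x).
Proof.
move=> /eqP hx; rewrite /inFq.
suff h : x = - (- x) ^+ q by rewrite {2}h opprK.
have := frobD x (- x); rewrite subrr expr0n.
rewrite (negbTE (lt0n_neq0 (q_gt0 q_gt1))) hx => /eqP; rewrite eq_sym addr_eq0.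
by move/eqP.
Qed.

Lemma inFq_sum (I : Type) (r : seq I) (Pr : pred I) (F : I -> L) :
  (forall i, inFq q (F i)) -> inFq q (\sum_(i <- r | Pr i) F i).
Proof.
move=> h; apply: (big_ind (fun x => inFq q x)) => //; last by move=> x y; apply: inFq_add.
by rewrite /inFq expr0n (negbTE (lt0n_neq0 (q_gt0 q_gt1))).
Qed.

Lemma Tr_sum (I : finType) (F : I -> L) : Tr (\sum_(i : I) F i) = \sum_(i : I) Tr (F i).
Proof.
rewrite /Tr; under eq_bigr do rewrite frobqj_sum.
by rewrite exchange_big.
Qed.

Lemma Tr_scale (d y : L) : inFq q d -> Tr (d * y) = d * Tr y.
Proof.
move=> hd; rewrite /Tr mulr_sumr; apply: eq_bigr => j _.
by rewrite exprMn (inFq_pow _ hd).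
Qed.

Lemma Tr_inFq y : inFq q (Tr y).
Proof.
rewrite /inFq /Tr -{2}(expn1 q) frobqj_sum expn1.
under eq_bigr do rewrite -exprM -expnSr.
move: n_gt0 cardL; case: (n) => [|k] // _ hc.
rewrite big_ord_recr big_ord_recl /= addrC; apply/eqP; congr (_ + _).
by rewrite -hc expf_card expn0 expr1.
Qed.

Lemma Tr_nondeg y : (forall b, Tr (b * y) = 0) -> y = 0.
Proof.
move=> h; apply/eqP; apply: contraT => hy.
have hall : forall z, Tr z = 0 by move=> z; rewrite -(divfK hy z) h.
have [k hk] : exists k, n = k.+1 by exists n.-1; rewrite prednK.
pose P : {poly L} := \sum_(j < k.+1) 'X^(q ^ j).
have P0 : P != 0.
  apply/eqP => P0; have := congr1 (fun p : {poly L} => p`_(q ^ k)) P0.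
  rewrite /= coef0 coef_sum big_ord_recr /= coefXn eqxx big1 ?add0r.
    by move/eqP; rewrite oner_eq0.
  by move=> j _; rewrite coefXn eqn_exp2l // gtn_eqF.
have := max_poly_roots P0 (rs := enum L).
rewrite enum_uniq -cardE cardL hk.
have -> : all (root P) (enum L).
  apply/allP => z _; rewrite /root /P horner_sum.
  under eq_bigr do rewrite hornerXn.
  by have := hall z; rewrite /Tr hk => ->.
move=> /(_ isT isT) hlt.
have : (size P <= (q ^ k).+1)%N.
  apply: leq_trans (size_sum _ _ _) _.
  apply/bigmax_leqP => j _; rewrite size_polyXn ltnS leq_pexp2l ?(q_gt0 q_gt1) //.
  by rewrite -ltnS ltn_ord.
move=> hs; have := leq_trans hlt hs; rewrite expnS.
have : (0 < q ^ k)%N by rewrite expn_gt0 (q_gt0 q_gt1).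
have := q_gt1; move: (q ^ k)%N => X. nia.
Qed.

Lemma reverse (P : pred nat) (d : {ffun L -> L}) :
  (forall s t j, (s <= N q n)%N -> (t <= N q n)%N -> (j < n)%N -> P t -> ~~ P (N q n - s)%N ->
     ~~ ((0 < s * q ^ j + t)%N && (N q n %| s * q ^ j + t)%N)) ->
  d \in dual q (Cset P) -> d \in Cset (Pperp P).
Proof.
move=> Hc; rewrite inE => /andP[/forallP hF /forall_inP hO].
apply/CsetP; split => // s hs Ps.
apply: Tr_nondeg => b.
pose c := [ffun x : L => Tr (b * x ^+ s)].
have cC : c \in Cset P.
  apply/CsetP; split => [x|t ht Pt]; first by rewrite ffunE Tr_inFq.
  rewrite /S.
  under eq_bigr => x _ do rewrite ffunE /Tr mulr_suml.
  rewrite exchange_big big1 // => j _ /=.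
  under eq_bigr => x _ do rewrite exprMn -exprM -mulrA -exprD.
  rewrite -mulr_sumr sum_pow ?mulr0 //; exact: Hc.
have := hO c cC => /eqP.
have -> : \sum_(x : L) c x * d x = Tr (b * S d s).
  rewrite /S mulr_sumr Tr_sum; apply: eq_bigr => x _.
  by rewrite ffunE mulrC -Tr_scale // mulrCA.
by [].
Qed.

Lemma dual_Cset (P : pred nat) : P 0%N ->
  (forall s t j, (s <= N q n)%N -> (t <= N q n)%N -> (j < n)%N -> P t -> ~~ P (N q n - s)%N ->
     ~~ ((0 < s * q ^ j + t)%N && (N q n %| s * q ^ j + t)%N)) ->
  dual q (Cset P) = Cset (Pperp P).
Proof.
move=> P0 Hc; apply/setP => d; apply/idP/idP; first exact: reverse.
move=> dC; rewrite inE; apply/andP; split.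
  by case/CsetP: dC => h _; apply/forallP.
apply/forall_inP => c cC; apply/eqP; exact: forward P0 cC dC.
Qed.

Lemma ext_code_Cset (Z : {set L}) : (forall b, b \in Z -> b != 0) ->
  ext_code q n alpha Z = Cset (fun t => (t == 0%N) || ((0 < t)%N && (alpha ^+ t \in Z))).
Proof.
move=> hZ0; apply/setP => c; rewrite inE /cyclic_code.
have S0 : S c 0 = c 0 + \sum_(i < N q n) c (alpha ^+ i).
  rewrite /S (sum_split (fun x => c x * x ^+ 0)) expr0 mulr1; congr (_ + _).
  by apply: eq_bigr => i _; rewrite expr0 mulr1.
have St : forall t, (0 < t)%N -> S c t = \sum_(i < N q n) c (alpha ^+ i) * (alpha ^+ t) ^+ i.
  move=> t t0; rewrite /S (sum_split (fun x => c x * x ^+ t)) expr0n (gtn_eqF t0) mulr0 add0r.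
  by apply: eq_bigr => i _; rewrite exprAC.
apply/idP/CsetP.
- case/andP => /andP[/forallP hF /forall_inP hZ] /eqP h0.
  split.
    move=> x; case: (eqVneq x 0) => [->|hx].
      by rewrite h0; apply: inFq_opp; apply: inFq_sum.
    have [i ->] := prim_rootP prim (expN hx); exact: hF.
  move=> t ht /orP[/eqP->|/andP[t0 tZ]]; first by rewrite S0 h0 addNr.
  by rewrite St //; apply/eqP; apply: hZ.
- case=> hF hS; apply/andP; split; first (apply/andP; split).
  + by apply/forallP.
  + apply/forall_inP => b bZ.
    have [i bi] := prim_rootP prim (expN (hZ0 b bZ)).
    pose t := if (i == 0 :> nat) then N q n else i.
    have ht : alpha ^+ t = b.
      rewrite /t bi; case: ifP => [/eqP e|_] //.
      by rewrite e (prim_expr_order prim) expr0.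
    have t0 : (0 < t)%N.
      rewrite /t; case: ifP => [_|/negbT]; [exact: N_gt0| by rewrite lt0n].
    have tle : (t <= N q n)%N.
      rewrite /t; case: ifP => // _; exact: ltnW (ltn_ord i).
    apply/eqP; rewrite -ht -St //; apply: hS => //; apply/orP; right.
    by rewrite t0 ht.
  + rewrite -addr_eq0 -S0; apply/eqP; exact: hS.
Qed.

End Field.

Lemma comb q n (P : pred nat) : (1 < q)%N -> (0 < n)%N -> P 0%N ->
  (forall k t v, (0 < t <= N q n)%N -> (0 < v <= N q n)%N -> v = t * q ^ k %[mod N q n] ->
     P t -> P v) ->
  forall s t j, (s <= N q n)%N -> (t <= N q n)%N -> (j < n)%N -> P t -> ~~ P (N q n - s)%N ->
     ~~ ((0 < s * q ^ j + t)%N && (N q n %| s * q ^ j + t)%N).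
Proof.
move=> q1 n0 P0 Pcl s t j hs ht hj Pt nP; apply/negP => /andP[e0].
rewrite /dvdn => /eqP hmod.
have qn : (q ^ n = (N q n).+1)%N by rewrite /N subn1 prednK // expn_gt0 ltnW.
have back : forall x, (x * q ^ j * q ^ (n - j) = x %[mod N q n])%N.
  move=> x; rewrite -mulnA -expnD subnKC ?(ltnW hj) // qn mulnS addnC.
  by rewrite modnMDl.
set v := (N q n - s)%N in nP.
have [v0|v0] := posnP v; first by move: nP; rewrite v0 P0.
have htv : (t = v * q ^ j %[mod N q n])%N.
  apply/eqP; rewrite -(eqn_modDr (s * q ^ j)) -mulnDl /v subnK // addnC.
  by rewrite hmod modnMr.
have hvN : (v <= N q n)%N by rewrite /v leq_subr.
have [t0|t0] := posnP t.
  have : (v = 0 %[mod N q n])%N.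
    have h1 : (v * q ^ j = 0 %[mod N q n])%N by rewrite -htv t0.
    by rewrite -(back v) -modnMml h1 mod0n mul0n mod0n.
  have [vN|vN] := eqVneq v (N q n).
    move: vN; rewrite /v => vN.
    have s0 : s = 0%N by move: vN hs; clear; lia.
    by move: e0; rewrite s0 t0.
  rewrite mod0n modn_small; first by move=> h; move: v0; rewrite h.
  by rewrite ltn_neqAle vN hvN.
apply/negP: nP; rewrite negbK.
apply: (Pcl (n - j)%N t v) => //; first by rewrite t0.
- by rewrite v0.
- by rewrite -(back v) -modnMml -htv modnMml.
Qed.

Section FrobPk.
Local Open Scope ring_scope.
Lemma frob_pk (L : finFieldType) p k (x y : L) : (p \in [pchar L]) ->
  ((x + y) ^+ (p ^ k) = x ^+ (p ^ k) + y ^+ (p ^ k)).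
Proof.
move=> cp; elim: k x y => [|k IH] x y; first by rewrite expn0 !GRing.expr1.
rewrite expnSr !GRing.exprM IH -!(pFrobenius_autE cp) pFrobenius_autD_comm //.
exact: mulrC.
Qed.
End FrobPk.

Lemma digit_0 q i : digit q i 0 = 0%N.
Proof. by rewrite /digit div0n mod0n. Qed.

Lemma wtq_0 q n : wtq q n 0 = 0%N.
Proof. by rewrite /wtq big1 // => i _; rewrite digit_0. Qed.

Lemma OEdiff_0 q n : OEdiff q n 0 = 0%N.
Proof.
by rewrite /OEdiff /Osum /Esum !big1 // => i _; rewrite digit_0.
Qed.

Unset Implicit Arguments.
Local Open Scope ring_scope.

Theorem theorem4p1 (p l m : nat) (L : finFieldType) (alpha : L)
    (r : nat) (I : pred nat) :
  prime p -> (0 < l)%N -> (0 < m)%N ->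
  #|L| = ((p ^ l) ^ (2 * m))%N ->
  (#|L|.-1).-primitive_root alpha ->
  (r < (2 * m) * (p ^ l - 1))%N ->
  {subset I <= Mr (p ^ l) m r} ->
  dual (p ^ l) (Ccode (p ^ l) (2 * m) m alpha r I) =
  Ccode (p ^ l) (2 * m) m alpha ((2 * m) * (p ^ l - 1) - r)%N (Ibar (p ^ l) m r I).
Proof.
move=> pr l0 m0 cardL prim hr _.
case: m m0 cardL hr => [//|m'] _ cardL hr.
set q := (p ^ l)%N in cardL hr *.
set n := (2 * m'.+1)%N in cardL hr *.
set W := (n * (q - 1))%N in hr *.
have p1 := prime_gt1 pr.
have q1 : (1 < q)%N.
  rewrite /q; have : (p ^ 1 <= p ^ l)%N by rewrite leq_pexp2l // ltnW.
  by rewrite expn1; lia.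
have n0 : (0 < n)%N by rewrite /n.
have W0 : (0 < W)%N by rewrite /W muln_gt0 n0 subn_gt0.
have cp : (p \in [pchar L])%R.
  by apply: (card_finPcharP (n := (l * n)%N)) => //; rewrite cardL /q -expnM.
have Lc0 : (#|L|%:R : L) = 0%R.
  have lnp : (0 < l * n)%N by rewrite muln_gt0 l0 n0.
  by rewrite cardL /q -expnM natrX (pcharf0 cp) expr0n eqn0Ngt lnp.
have frobD : forall x y : L, ((x + y) ^+ q = x ^+ q + y ^+ q)%R.
  by move=> x y; apply: frob_pk.
have primN : (N q n).-primitive_root alpha.
  by move: prim; rewrite cardL /N subn1.
have a0 := alpha_neq0 q1 n0 cardL primN.
have ltN : forall u, (u < q ^ n)%N = (u <= N q n)%N.
  have : (0 < q ^ n)%N by rewrite expn_gt0 ltnW.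
  by move=> h u; rewrite /N; apply/idP/idP; lia.
have alpha_eq : forall t u, (0 < t <= N q n)%N -> (0 < u <= N q n)%N ->
    (alpha ^+ t == alpha ^+ u)%R = (t == u).
  move=> t u ht hu; apply/idP/eqP => [|->//].
  by rewrite (eq_prim_root_expr primN) => /eqP; exact: modeq_1N.
pose Pr (r0 : nat) (I0 : pred nat) : pred nat := fun t =>
  ((wtq q n t + r0 < W)%N || ((wtq q n t == W - r0)%N && Ibar q m'.+1 r0 I0 (OEdiff q n t))).
have code_eq : forall r0 I0, (r0 < W)%N ->
    Ccode q n m'.+1 alpha r0 I0 = Cset L q n (Pr r0 I0).
  move=> r0 I0 hr0; rewrite /Ccode hr0 (ext_code_Cset q1 n0 cardL primN frobD).
    apply: Cset_ext => t ht.
    have [->|t0] := posnP t; first by rewrite /Pr wtq_0 add0n hr0.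
    rewrite /ZrI in_setU /Pr /=; congr (_ || _).
      rewrite /Zr inE; apply/existsP/idP.
        case=> u /and3P[u0 /eqP hu hw].
        have uN : (u <= N q n)%N by rewrite -ltN ltn_ord.
        have := alpha_eq t u; rewrite t0 u0 ht uN hu eqxx => /(_ isT isT) /esym /eqP tu.
        by move: hw; rewrite -tu; lia.
      move=> hw; have tq : (t < q ^ n)%N by rewrite ltN.
      by exists (Ordinal tq); rewrite /= t0 eqxx /=; lia.
    apply/bigcupP/andP.
      case=> k hk; rewrite /Theta inE => /existsP[u /and3P[/eqP hu /eqP hw /eqP hk']].
      have uN : (u <= N q n)%N by rewrite -ltN ltn_ord.
      have u0 : (0 < u)%N.
        rewrite lt0n; apply/eqP => u0; move: hw; rewrite u0 wtq_0; lia.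
      have := alpha_eq t u; rewrite t0 u0 ht uN hu eqxx => /(_ isT isT) /esym /eqP tu.
      by rewrite tu hw hk' eqxx.
    case=> /eqP hw hI.
    have hk : (OEdiff q n t < (m'.+1 * (q - 1)).+1)%N by rewrite ltnS OEdiff_le.
    exists (Ordinal hk) => //.
    have tq : (t < q ^ n)%N by rewrite ltN.
    by rewrite /Theta inE; apply/existsP; exists (Ordinal tq); rewrite /= eqxx hw !eqxx.
  move=> b; rewrite /ZrI in_setU => /orP[].
    by rewrite /Zr inE => /existsP[u /and3P[_ /eqP -> _]]; rewrite expf_neq0.
  case/bigcupP => k _; rewrite /Theta inE => /existsP[u /and3P[/eqP -> _ _]].
  by rewrite expf_neq0.
have P0 : Pr r I 0%N by rewrite /Pr wtq_0 add0n hr.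
have Pcl : forall k t v, (0 < t <= N q n)%N -> (0 < v <= N q n)%N ->
    v = t * q ^ k %[mod N q n] -> Pr r I t -> Pr r I v.
  move=> k t v ht hv hmod; have [hw hd] := rot_invariant q1 ht hv hmod.
  by rewrite /Pr hw hd.
rewrite (code_eq r I hr) (dual_Cset q1 n0 cardL primN Lc0 frobD P0 (comb q1 n0 P0 Pcl)).
have qnN : forall s, (s <= N q n)%N -> (s < q ^ n)%N by move=> s; rewrite ltN.
have [r0|rpos] := posnP r.
-
  subst r.
  have key : forall s, (s <= N q n)%N -> Pperp q n (Pr 0%N I) s = (s == 0%N) && I 0%N.
    move=> s hs; have sq := qnN s hs.
    rewrite /Pperp /Pr wtN // OEdiffN //.
    have := wt_le q1 n s.
    have [w0|wpos] := posnP (wtq q n s).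
      have s0 := wt0 q1 sq w0; rewrite s0 in w0 *.
      by rewrite w0 subn0 addn0 ltnn /= eqxx /= OEdiff_0 /Ibar /Mr /= negbK.
    move=> hle.
    have -> : (W - wtq q n s + 0 < W)%N by lia.
    have -> : (s == 0%N) = false by apply/negbTE; apply/eqP => s0; move: wpos; rewrite s0 wtq_0.
    by [].
  rewrite subn0 /Ccode ltnn /Ibar /Mr /=.
  case I0 : (I 0%N) => /=.
  + rewrite /RM (_ : (W - 1 < W)%N); last by lia.
    rewrite (ext_code_Cset q1 n0 cardL primN frobD).
      apply: Cset_ext => t ht; rewrite key // I0 andbT.
      have [->|t0] := posnP t; first by [].
      rewrite /=; apply/esym/negbTE; rewrite /Zr inE; apply/existsP => [][u /and3P[u0 _ hw]].
      have hw0 : wtq q n u = 0%N by move: hw; rewrite /W; lia.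
      by move: u0; rewrite (wt0 q1 (ltn_ord u) hw0).
    by move=> b; rewrite /Zr inE => /existsP[u /and3P[_ /eqP -> _]]; rewrite expf_neq0.
  + transitivity (Cset L q n pred0).
      apply: Cset_ext => t ht; rewrite key // I0 andbF //.
    apply/setP => c; rewrite /full_code !inE; apply/idP/idP => [/andP[]//|h].
    by rewrite h; apply/forallP.
-
  have hr' : (W - r < W)%N by lia.
  rewrite (code_eq (W - r)%N (Ibar q m'.+1 r I) hr').
  apply: Cset_ext => s hs; have sq := qnN s hs.
  rewrite /Pperp /Pr wtN // OEdiffN //.
  have wle := wt_le q1 n s.
  have kle := OEdiff_le m'.+1 q1 s.
  have kodd := OEdiff_odd m'.+1 q1 s.
  move: wle kle kodd; rewrite -/n -/W.
  move: (wtq q n s) (OEdiff q n s) => w k wle kle kodd.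
  case: (ltngtP w r) => h.
  + have -> : (W - w + r < W)%N = false by apply/negbTE; rewrite -leqNgt; lia.
    have -> : (W - w == W - r)%N = false by apply/negbTE; apply/eqP; lia.
    have -> : (w + (W - r) < W)%N by lia.
    by [].
  + have -> : (W - w + r < W)%N by lia.
    have -> : (w + (W - r) < W)%N = false by apply/negbTE; rewrite -leqNgt; lia.
    have -> : (w == W - (W - r))%N = false by apply/negbTE; apply/eqP; lia.
    by [].
  + subst w.
    have -> : (W - r + r < W)%N = false by apply/negbTE; rewrite -leqNgt; lia.
    have -> : (r + (W - r) < W)%N = false by apply/negbTE; rewrite -leqNgt; lia.
    have -> : (r == W - (W - r))%N by apply/eqP; lia.
    rewrite eqxx /=.
    have hM : Mr q m'.+1 r k by rewrite /Mr /= kle kodd eqxx.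
    have hM' : Mr q m'.+1 (W - r) k.
      rewrite /Mr /= kle kodd /W oddB; last by lia.
      by rewrite oddM /n oddM /=.
    by rewrite /Ibar /= hM hM'.
Qed.
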